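(* For every $n\ge0$, the number $e_n$ of Dyck paths with catastrophes of length $n$ equals the number $h_n$ of $1$-horizontal Dyck paths of length $n$.
   Context: A Dyck path with catastrophes of length $n$ is a sequence of $n$ steps starting and ending at altitude $0$ and never going below altitude $0$, where each step is either an up step $(1,1)$, a down step $(1,-1)$, or a catastrophe, i.e. a step from an altitude $h>1$ directly to altitude $0$. A $1$-horizontal Dyck path of length $n$ is a sequence of $n$ steps starting and ending at altitude $0$ and never going below altitude $0$, where each step is an up step $(1,1)$, a down step $(1,-1)$, or a horizontal step $(1,0)$, horizontal steps being allowed only at altitude $1$. *)

(* Defs.v *)
From HB Require Import structures.
From mathcomp Require Import all_boot.
Set Implicit Arguments. Unset Strict Implicit. Unset Printing Implicit Defensive.

Inductive cstep := CUp | CDown | CCat.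
Definition cstep_code (s : cstep) : 'I_3 :=
  match s with CUp => inord 0 | CDown => inord 1 | CCat => inord 2 end.
Definition cstep_decode (i : 'I_3) : cstep :=
  match val i with 0 => CUp | 1 => CDown | _ => CCat end.
Lemma cstep_codeK : cancel cstep_code cstep_decode.
Proof. by case; rewrite /cstep_decode /= inordK. Qed.
HB.instance Definition _ := Finite.copy cstep (can_type cstep_codeK).

Inductive hstep := HUp | HDown | HFlat.
Definition hstep_code (s : hstep) : 'I_3 :=
  match s with HUp => inord 0 | HDown => inord 1 | HFlat => inord 2 end.
Definition hstep_decode (i : 'I_3) : hstep :=
  match val i with 0 => HUp | 1 => HDown | _ => HFlat end.
Lemma hstep_codeK : cancel hstep_code hstep_decode.
Proof. by case; rewrite /hstep_decode /= inordK. Qed.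
HB.instance Definition _ := Finite.copy hstep (can_type hstep_codeK).

Fixpoint cvalid_from (h : nat) (s : seq cstep) : bool :=
  match s with
  | [::] => h == 0
  | CUp :: s' => cvalid_from h.+1 s'
  | CDown :: s' => (0 < h) && cvalid_from h.-1 s'
  | CCat :: s' => (1 < h) && cvalid_from 0 s'
  end.

Fixpoint hvalid_from (h : nat) (s : seq hstep) : bool :=
  match s with
  | [::] => h == 0
  | HUp :: s' => hvalid_from h.+1 s'
  | HDown :: s' => (0 < h) && hvalid_from h.-1 s'
  | HFlat :: s' => (h == 1) && hvalid_from h s'
  end.

Definition is_cat_dyck (s : seq cstep) := cvalid_from 0 s.
Definition is_1hor_dyck (s : seq hstep) := hvalid_from 0 s.

Definition e_count (n : nat) : nat := #|[set p : n.-tuple cstep | is_cat_dyck p]|.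
Definition h_count (n : nat) : nat := #|[set p : n.-tuple hstep | is_1hor_dyck p]|.

(* Main.v *)
Require Import Defs.
From mathcomp Require Import all_boot.
From mathcomp Require Import zify.

Fixpoint ret (d : nat) (s : seq cstep) : bool :=
  match s with
  | [::] => false
  | CUp :: s' => ret d.+1 s'
  | CDown :: s' => (d == 1) || ret d.-1 s'
  | CCat :: _ => false
  end.

Fixpoint psi (h k : nat) (t : seq hstep) : seq cstep :=
  match t with
  | [::] => [::]
  | HUp :: t' => CUp :: psi h.+1 k t'
  | HFlat :: t' => CUp :: psi h k.+1 t'
  | HDown :: t' => if h == 1 then (if 0 < k then CCat else CDown) :: psi 0 0 t'
                   else CDown :: psi h.-1 k t'
  end.

Fixpoint phi (h k : nat) (s : seq cstep) : seq hstep :=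
  match s with
  | [::] => [::]
  | CUp :: s' => if (h == 1) && ~~ ret 1 s' then HFlat :: phi 1 k.+1 s'
                 else HUp :: phi h.+1 k s'
  | CDown :: s' => HDown :: (if h == 1 then phi 0 0 s' else phi h.-1 k s')
  | CCat :: s' => HDown :: phi 0 0 s'
  end.

Lemma size_psi h k t : size (psi h k t) = size t.
Proof.
elim: t h k => [|[] t IH] h k //=; rewrite ?IH //.
by case: ifP => _ /=; rewrite IH.
Qed.

Lemma size_phi h k s : size (phi h k s) = size s.
Proof.
elim: s h k => [|[] s IH] h k //=; rewrite ?IH //.
  by case: ifP => _ /=; rewrite IH.
by case: ifP => _; rewrite IH.
Qed.

Lemma L1 t h k d : hvalid_from h t -> 0 < d < h -> ret d (psi h k t).
Proof.
elim: t h k d => [|[] t IH] h k d /=.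
- by move=> /eqP -> /andP[].
- move=> Hv Hd; apply: IH => //; lia.
- move=> /andP[Hh Hv] Hd.
  have -> : (h == 1) = false by apply/eqP; lia.
  rewrite /=; case: eqP => // Hd1 /=; apply: IH => //; lia.
- by move=> /andP[/eqP -> _]; lia.
Qed.

Lemma L2 t h k d : hvalid_from h t -> 0 < h -> 0 < k -> h <= d -> ret d (psi h k t) = false.
Proof.
elim: t h k d => [|[] t IH] h k d //=.
- move=> Hv Hh Hk Hd; apply: IH => //; lia.
- move=> /andP[Hh Hv] _ Hk Hd.
  case: eqP => [_|Hh1] /=; first by rewrite Hk.
  have -> : (d == 1) = false by apply/eqP; lia.
  apply: IH => //; lia.
- move=> /andP[/eqP Hh Hv] _ Hk Hd; subst h; apply: IH => //.
Qed.

Lemma claimA t h k : hvalid_from h t -> (h == 0 -> k == 0) ->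
  cvalid_from (h + k) (psi h k t) && (phi h k (psi h k t) == t).
Proof.
elim: t h k => [|[] t IH] h k /=.
- by move=> /eqP -> /(_ isT) /eqP ->.
- move=> Hv Hk.
  have /andP[H1 /eqP H2] := IH h.+1 k Hv ltac:(by []).
  rewrite -addSn H1 /=.
  case: (eqVneq h 1) => [Eh|Nh] /=.
    subst h; rewrite (@L1 t 2 k 1 Hv) /=; last by [].
    by rewrite H2.
  by rewrite H2.
- move=> /andP[Hh Hv] Hk.
  case: (eqVneq h 1) => [Eh|Nh].
    subst h; have /andP[H1 /eqP H2] := IH 0 0 Hv (fun _ => isT).
    case: (posnP k) => [k0|kp] /=.
      by subst k; rewrite H1 H2 /=.
    rewrite H1 H2 /= andbT; apply/andP; split => //; lia.
  have /andP[H1 /eqP H2] := IH h.-1 k Hv ltac:(move=> /eqP; lia).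
  rewrite /= (_ : (h + k).-1 = h.-1 + k); last by lia.
  rewrite H1 (negbTE Nh) H2 /= eqxx andbT; lia.
- move=> /andP[/eqP Eh Hv] Hk; subst h.
  have /andP[H1 /eqP H2] := IH 1 k.+1 Hv ltac:(by []).
  rewrite -addnS H1 /= (@L2 t 1 k.+1 1 Hv) //=.
  by rewrite H2.
Qed.

Definition Inv (h k : nat) (s : seq cstep) : bool :=
  if h == 0 then k == 0
  else if h == 1 then (k == 0) || ~~ ret 1 s
  else ret h.-1 s && ((k == 0) || ~~ ret h s).

Lemma claimB s h k : cvalid_from (h + k) s -> Inv h k s ->
  hvalid_from h (phi h k s) && (psi h k (phi h k s) == s).
Proof.
elim: s h k => [|[] s IH] h k /=.
- by case: h => [|h] //= /eqP; rewrite addSn.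
- case: h => [|[|h]] Hv.
  + rewrite /Inv /= => /eqP Hk; subst k.
    have /andP[H1 /eqP H2] := IH 1 0 Hv isT.
    by rewrite /= H1 H2 eqxx.
  + rewrite /Inv /= => Hk.
    case Hr: (ret 1 s) => /=.
      have Hi : Inv 2 k s by rewrite /Inv /= Hr.
      have /andP[H1 /eqP H2] := IH 2 k Hv Hi.
      by rewrite H1 H2 eqxx.
    have Hi : Inv 1 k.+1 s by rewrite /Inv /= Hr.
    have /andP[H1 /eqP H2] := IH 1 k.+1 Hv Hi.
    by rewrite H1 H2 eqxx.
  + rewrite {1}/Inv /= => Hi.
    have /andP[H1 /eqP H2] := IH h.+3 k Hv Hi.
    by rewrite /= H1 H2 eqxx.
- case: h => [|[|h]] /andP[He Hv].
  + by rewrite /Inv /= => /eqP Hk; subst k.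
  + rewrite /Inv /= orbF => /eqP Hk; subst k.
    have /andP[H1 /eqP H2] := IH 0 0 Hv isT.
    by rewrite /= H1 H2 eqxx.
  + rewrite {1}/Inv /= => Hi.
    have Hi' : Inv h.+1 k s.
      by move: Hi; case: h {He Hv} => [|h] /=; rewrite /Inv /=.
    have /andP[H1 /eqP H2] := IH h.+1 k Hv Hi'.
    by rewrite /= H1 H2 eqxx.
- case: h => [|[|h]] /andP[He Hv].
  + by rewrite /Inv /= => /eqP Hk; subst k.
  + move=> _; have /andP[H1 /eqP H2] := IH 0 0 Hv isT.
    case: k He => [|k] //= He.
    by rewrite H1 H2 eqxx.
  + by rewrite /Inv /=.
Qed.

Lemma psiP n (t : n.-tuple hstep) : size (psi 0 0 t) == n.
Proof. by rewrite size_psi size_tuple. Qed.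
Lemma phiP n (t : n.-tuple cstep) : size (phi 0 0 t) == n.
Proof. by rewrite size_phi size_tuple. Qed.
Definition psiT n (t : n.-tuple hstep) : n.-tuple cstep := Tuple (psiP n t).
Definition phiT n (t : n.-tuple cstep) : n.-tuple hstep := Tuple (phiP n t).

Theorem theorem3p1 : forall n : nat, e_count n = h_count n.
Proof.
move=> n; rewrite /e_count /h_count; apply/eqP; rewrite eqn_leq; apply/andP; split.
- rewrite -(@card_in_imset _ _ (@phiT n)).
    apply: subset_leq_card; apply/subsetP => x /imsetP[y].
    rewrite !inE /is_cat_dyck => Hy ->.
    by have /andP[] := @claimB y 0 0 Hy isT.
  move=> x y; rewrite !inE /is_cat_dyck => Hx Hy /(congr1 val) /= E.
  apply: val_inj; change (tval x = tval y).
  have /andP[_ /eqP <-] := @claimB x 0 0 Hx isT.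
  have /andP[_ /eqP <-] := @claimB y 0 0 Hy isT.
  by rewrite E.
- rewrite -(@card_in_imset _ _ (@psiT n)).
    apply: subset_leq_card; apply/subsetP => x /imsetP[y].
    rewrite !inE /is_1hor_dyck => Hy ->.
    by have /andP[] := @claimA y 0 0 Hy (fun _ => isT).
  move=> x y; rewrite !inE /is_1hor_dyck => Hx Hy /(congr1 val) /= E.
  apply: val_inj; change (tval x = tval y).
  have /andP[_ /eqP <-] := @claimA x 0 0 Hx (fun _ => isT).
  have /andP[_ /eqP <-] := @claimA y 0 0 Hy (fun _ => isT).
  by rewrite E.
Qed.
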